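(* Consider the fixed $p$-processor cup game or the variable-processor cup game, in the non-negative-fill version, where the emptier has $\varepsilon$ resource augmentation ($\varepsilon>0$). Then for every state $A$ and every game length $t\ge0$, $\operatorname{GREEDY}(A,t)=\operatorname{OPT}(A,t)$.
   Context: A state is a multiset of $n$ real nonnegative fills. In each round the filler chooses an integer $1\le p\le n$ (fixed $p$ in the $p$-processor game) and reals $a_i\in[0,1]$ with $\sum a_i=p$ and adds $a_i$ to cup $i$; then the emptier chooses $p$ distinct cups and replaces each of their fills $x$ by $\max(0,x-(1+\varepsilon))$. Backlog = maximum fill. $\operatorname{OPT}(S,0)$ is the backlog of $S$ and $\operatorname{OPT}(S,t)=\sup_{S'}\min_{S''}\operatorname{OPT}(S'',t-1)$ with $S'$ over states reachable from $S$ by a filler move and $S''$ over states reachable from $S'$ by an emptier move. $\operatorname{GREEDY}(S,t)$ is the supremum backlog a filler can achieve after $t$ rounds from $S$ when the emptier always empties the $p$ fullest cups. *)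

(* Defs.v *)
From HB Require Import structures.
From mathcomp Require Import all_boot all_order all_algebra.
From mathcomp Require Import boolp classical_sets reals.
Set Implicit Arguments. Unset Strict Implicit. Unset Printing Implicit Defensive.
Import Order.TTheory GRing.Theory Num.Theory.
Local Open Scope ring_scope.
Local Open Scope classical_set_scope.

(* A state of n cups: fill of each cup (the multiset of fills, with labels;
   all quantities below are invariant under relabelling). *)
Definition state (R : realType) (n : nat) := 'I_n -> R.

Inductive game := FixedGame of nat | VariableGame.

Definition allowed (n : nat) (g : game) (p : nat) : bool :=
  match g with
  | FixedGame q => p == q
  | VariableGame => (1 <= p <= n)%N
  end.

Definition game_ok (n : nat) (g : game) : Prop :=
  match g with
  | FixedGame q => (1 <= q <= n)%N
  | VariableGame => True
  end.

(* backlog = maximum fill (fills are nonnegative; empty max = 0) *)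
Definition backlog (R : realType) (n : nat) (S : state R n) : R :=
  \big[Num.max/0]_(i < n) S i.

Definition filler_move (R : realType) (n : nat) (p : nat) (S S' : state R n) : Prop :=
  exists a : 'I_n -> R,
    (forall i, 0 <= a i <= 1) /\ \sum_(i < n) a i = p%:R /\
    (forall i, S' i = S i + a i).

Definition empty_cups (R : realType) (n : nat) (eps : R) (S : state R n)
    (E : {set 'I_n}) : state R n :=
  fun i => if i \in E then Num.max 0 (S i - (1 + eps)) else S i.

Definition fullest (R : realType) (n : nat) (S : state R n) (E : {set 'I_n}) : Prop :=
  forall i j, i \in E -> j \notin E -> S j <= S i.

Fixpoint OPT (R : realType) (n : nat) (g : game) (eps : R) (t : nat) (S : state R n)
    {struct t} : R :=
  match t with
  | 0 => backlog S
  | t'.+1 =>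
      sup [set v | exists p, allowed n g p /\ exists S' : state R n,
             filler_move p S S' /\
             v = inf [set w | exists E : {set 'I_n}, #|E| = p /\
                        w = OPT g eps t' (empty_cups eps S' E)]]
  end.

Fixpoint GREEDY (R : realType) (n : nat) (g : game) (eps : R) (t : nat) (S : state R n)
    {struct t} : R :=
  match t with
  | 0 => backlog S
  | t'.+1 =>
      sup [set v | exists p, allowed n g p /\ exists S' : state R n,
             filler_move p S S' /\
             exists E : {set 'I_n}, #|E| = p /\ fullest S' E /\
             v = GREEDY g eps t' (empty_cups eps S' E)]
  end.

(* Main.v *)
Require Import Defs.
From HB Require Import structures.
From mathcomp Require Import all_boot all_order all_algebra.
From mathcomp Require Import boolp classical_sets reals.
From mathcomp Require Import fingroup perm.
From mathcomp Require Import lra zify.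
Import Order.TTheory GRing.Theory Num.Theory.
Local Open Scope ring_scope.

Lemma maxP2 {R : realType} (x y : R) :
  x <= Num.max x y /\ y <= Num.max x y /\ (Num.max x y = x \/ Num.max x y = y).
Proof.
rewrite /Order.max; case: ifP => h.
  split; [exact: ltW|]; split; [exact: lexx| by right].
split; [exact: lexx|]; split; [|by left].
by rewrite leNgt h.
Qed.

Ltac gen_max := repeat match goal with |- context [@Order.max ?d ?T ?z ?w] =>
  have := maxP2 z w; move: (@Order.max d T z w) => ? end.
Ltac mlra := gen_max; intros; lra.

Lemma backlog_ge0 {R : realType} {n} (S : state R n) : 0 <= backlog S.
Proof.
rewrite /backlog; elim/big_rec: _ => [|i x _ hx]; first exact: lexx.
move: hx; mlra.
Qed.

Lemma backlog_le {R : realType} {n} (S : state R n) (c : R) :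
  0 <= c -> (forall k, S k <= c) -> backlog S <= c.
Proof.
move=> hc h; rewrite /backlog; elim/big_rec: _ => [|i x _ hx] //.
move: hx (h i); mlra.
Qed.

Lemma le_backlog {R : realType} {n} (S : state R n) i : S i <= backlog S.
Proof.
move: (mem_index_enum i); rewrite /backlog; elim: (index_enum _) => // x r IH.
rewrite inE big_cons /= => /orP [/eqP ->|h].
  by case: (maxP2 (S x) (\big[Num.max/0]_(j <- r) S j)).
have := IH h. move: (\big[Num.max/0]_(j <- r) S j) => y. mlra.
Qed.

Lemma backlog_mono {R : realType} {n} (A B : state R n) :
  (forall k, exists m, A k <= B m) -> backlog A <= backlog B.
Proof.
move=> h; apply: backlog_le; first exact: backlog_ge0.
move=> k; case: (h k) => m hm; exact: le_trans hm (le_backlog B m).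
Qed.

Definition Qr {R : realType} (d ai aj bi bj : R) : Prop :=
  (ai <= bj /\ aj <= bi) \/ (ai <= Num.max 0 (bi - d) /\ aj <= bi /\ aj <= bj + d).

Definition Rel {R : realType} {n} (d : R) (A B : state R n) : Prop :=
  (forall k, A k <= B k) \/
  exists i j : 'I_n, i != j /\ (forall k, k != i -> k != j -> A k <= B k) /\
     Qr d (A i) (A j) (B i) (B j).

Lemma Rel_backlog {R : realType} {n} (d : R) (A B : state R n) :
  0 <= d -> (forall k, 0 <= B k) -> Rel d A B -> backlog A <= backlog B.
Proof.
move=> hd hB [hP|[i [j [hij [ho hQ]]]]]; apply: backlog_mono => k.
  by exists k.
case: (eqVneq k i) => [->|hki].
  case: hQ => [[h1 h2]|[h1 [h2 h3]]]; first by exists j.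
  exists i; move: h1 (hB i); mlra.
case: (eqVneq k j) => [->|hkj].
  by case: hQ => [[h1 h2]|[h1 [h2 h3]]]; exists i.
by exists k; apply: ho.
Qed.

Definition shift {R : realType} {n} (a : 'I_n -> R) (i j : 'I_n) (s : R) : 'I_n -> R :=
  fun k => a k + (if k == i then s else 0) - (if k == j then s else 0).

Lemma sum_shift {R : realType} {n} (a : 'I_n -> R) i j s :
  \sum_(k < n) shift a i j s k = \sum_(k < n) a k.
Proof.
rewrite /shift sumrB big_split /= -!big_mkcond /= !big_pred1_eq.
by rewrite addrK.
Qed.

Lemma shift_i {R : realType} {n} (a : 'I_n -> R) i j s : i != j -> shift a i j s i = a i + s.
Proof. by move=> h; rewrite /shift eqxx (negbTE h) subr0. Qed.
Lemma shift_j {R : realType} {n} (a : 'I_n -> R) i j s : i != j -> shift a i j s j = a j - s.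
Proof. by move=> h; rewrite /shift eqxx eq_sym (negbTE h) addr0. Qed.
Lemma shift_o {R : realType} {n} (a : 'I_n -> R) i j s k : k != i -> k != j -> shift a i j s k = a k.
Proof. by move=> h1 h2; rewrite /shift (negbTE h1) (negbTE h2) addr0 subr0. Qed.


Lemma fill_step {R : realType} {n} (d : R) (A B a : 'I_n -> R) (p : nat) :
  0 <= d -> (forall k, 0 <= A k) -> (forall k, 0 <= B k) -> Rel d A B ->
  (forall k, 0 <= a k <= 1) -> \sum_(k < n) a k = p%:R ->
  exists b : 'I_n -> R, (forall k, 0 <= b k <= 1) /\ \sum_(k < n) b k = p%:R /\
     Rel d (fun k => A k + a k) (fun k => B k + b k).
Proof.
move=> hd hA hB hR ha hs.
case: hR => [hP|[i [j [hij [ho hQ]]]]].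
  exists a; split => //; split => //; left => k /=.
  by have := hP k; lra.
have hji : j != i by rewrite eq_sym.
have hab : forall k, 0 <= a k /\ a k <= 1 by move=> k; have /andP[] := ha k.
have Xcase : A i <= B j -> A j <= B i -> exists b : 'I_n -> R, (forall k, 0 <= b k <= 1) /\
     \sum_(k < n) b k = p%:R /\ Rel d (fun k => A k + a k) (fun k => B k + b k).
  move=> h1 h2; exists (shift a i j (a j - a i)); split; last split.
  - move=> k; case: (eqVneq k i) => [->|hki].
      by rewrite shift_i //; have := hab j; have := hab i; move=> [? ?] [? ?]; apply/andP; split; lra.
    case: (eqVneq k j) => [->|hkj].
      by rewrite shift_j //; have := hab j; have := hab i; move=> [? ?] [? ?]; apply/andP; split; lra.
    by rewrite shift_o.
  - by rewrite sum_shift.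
  - right; exists i, j; split => //; split.
      by move=> k hki hkj /=; rewrite shift_o //; have := ho k hki hkj; lra.
    by left; rewrite /= shift_i // shift_j //; split; lra.
case: hQ => [[h1 h2]|[h1 [h2 h3]]]; first exact: Xcase.
case: (ltP (B i) d) => hBi.
  apply: Xcase => //.
  by move: h1 (hA i) (hB j) hBi; mlra.
have hAi : A i <= B i - d by move: h1 hBi (hA i); mlra.
case: (leP (A j + a j - B i - a i) 0) => hs0.
  exists a; split => //; split => //.
  right; exists i, j; split => //; split.
    by move=> k hki hkj /=; have := ho k hki hkj; lra.
  right => /=; split; last split; try lra.
  by move: hAi hBi (hab i); mlra.
exists (shift a i j (A j + a j - B i - a i)); split; last split.
- move=> k; case: (eqVneq k i) => [->|hki].
    by rewrite shift_i //; have := hab j; have := hab i; move=> [? ?] [? ?]; apply/andP; split; lra.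
  case: (eqVneq k j) => [->|hkj].
    by rewrite shift_j //; have := hab j; have := hab i; move=> [? ?] [? ?]; apply/andP; split; lra.
  by rewrite shift_o.
- by rewrite sum_shift.
- right; exists i, j; split => //; split.
    by move=> k hki hkj /=; rewrite shift_o //; have := ho k hki hkj; lra.
  by left; rewrite /= shift_i // shift_j //; split; lra.
Qed.

Lemma empty_nonneg {R : realType} {n} {eps : R} {S : state R n} {E} :
  (forall k, 0 <= S k) -> forall k, 0 <= empty_cups eps S E k.
Proof.
move=> h k; rewrite /empty_cups; case: (k \in E) => //.
by case: (maxP2 0 (S k - (1 + eps))).
Qed.

Lemma empty_step {R : realType} {n} (eps : R) (A B : state R n) (F : {set 'I_n}) :
  0 <= 1 + eps -> (forall k, 0 <= A k) -> (forall k, 0 <= B k) -> Rel (1 + eps) A B ->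
  exists E : {set 'I_n}, #|E| = #|F| /\ Rel (1 + eps) (empty_cups eps A E) (empty_cups eps B F).
Proof.
move=> hd hA hB [hP|[i [j [hij [ho hQ]]]]].
  exists F; split => //; left => k; rewrite /empty_cups.
  by case: (k \in F); move: (hP k); mlra.
have hji : j != i by rewrite eq_sym.
pose Et := tperm i j @^-1: F.
have hEt : #|Et| = #|F| by rewrite card_preimset //; exact: perm_inj.
have mEo : forall k, k != i -> k != j -> (k \in Et) = (k \in F).
  by move=> k hki hkj; rewrite inE tpermD // eq_sym.
have mEi : (i \in Et) = (j \in F) by rewrite inE tpermL.
have mEj : (j \in Et) = (i \in F) by rewrite inE tpermR.
have hoE : forall E : {set 'I_n}, (forall k, k != i -> k != j -> (k \in E) = (k \in F)) ->
  forall k, k != i -> k != j -> empty_cups eps A E k <= empty_cups eps B F k.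
  move=> E hE k hki hkj; rewrite /empty_cups hE //.
  by case: (k \in F); move: (ho k hki hkj); mlra.
case: hQ => [[h1 h2]|[h1 [h2 h3]]].
  exists Et; split => //; right; exists i, j; split => //; split; first exact: hoE.
  left; rewrite /empty_cups mEi mEj; split.
    by case: (j \in F); move: h1; mlra.
  by case: (i \in F); move: h2; mlra.
case hi: (i \in F); case hj: (j \in F).
- exists F; split => //; right; exists i, j; split => //; split; first by apply: hoE.
  right; rewrite /empty_cups hi hj; split; last split.
  + by move: h1 (hA i) (hB i); mlra.
  + by move: h2 (hA j) (hB i); mlra.
  + by move: h3 (hA j) (hB j); mlra.
- exists Et; split => //; left => k; rewrite /empty_cups.
  case: (eqVneq k i) => [->|hki]; first by rewrite mEi hi hj.
  case: (eqVneq k j) => [->|hkj].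
    by rewrite mEj hi hj; move: h3 (hA j) (hB j); mlra.
  by rewrite mEo //; case: (k \in F); move: (ho k hki hkj); mlra.
- exists F; split => //; right; exists i, j; split => //; split; first by apply: hoE.
  right; rewrite /empty_cups hi hj; split; last split.
  + by move: h1 (hA i) (hB i); mlra.
  + by move: h2 (hA j) (hB i); mlra.
  + by move: h3 (hA j) (hB j); mlra.
- exists F; split => //; right; exists i, j; split => //; split; first by apply: hoE.
  right; rewrite /empty_cups hi hj; split; last split.
  + by move: h1 (hA i) (hB i); mlra.
  + by move: h2 (hA j) (hB i); mlra.
  + by move: h3 (hA j) (hB j); mlra.
Qed.

Lemma exists_fullest {R : realType} {n} (S : state R n) (p : nat) :
  (p <= n)%N -> exists E : {set 'I_n}, #|E| = p /\ fullest S E.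
Proof.
elim: p => [|p IH] hp.
  by exists finset.set0; split; [rewrite cards0 | move=> i j; rewrite inE].
have [E [hE hf]] := IH (ltnW hp).
have : (0 < #|~: E|)%N by have := cardsC E; rewrite card_ord hE; lia.
move=> /card_gt0P [j0 hj0].
case: (arg_maxP S hj0) => j hj0' hmax0.
have hj : j \in ~: E := hj0'.
have hmax : forall k, k \in ~: E -> S k <= S j := hmax0.
exists (j |: E); split.
  by move: hj; rewrite finset.in_setC => hj; rewrite cardsU1 hj hE.
move=> i k; rewrite !inE => /orP [/eqP ->|hiE] /norP [hkj hkE].
  by apply: hmax; rewrite inE.
exact: hf.
Qed.

Lemma filler_le {R : realType} {n} {p : nat} {S S' : state R n} :
  filler_move p S S' -> (p <= n)%N.
Proof.
move=> [a [ha [hs _]]].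
have : \sum_(k < n) a k <= \sum_(k < n) (1 : R).
  by apply: ler_sum => k _; have /andP[] := ha k.
rewrite sumr_const card_ord hs.
by rewrite ler_nat.
Qed.

Lemma filler_nonneg {R : realType} {n} {p : nat} {S S' : state R n} :
  (forall k, 0 <= S k) -> filler_move p S S' -> forall k, 0 <= S' k.
Proof.
move=> hS [a [ha [_ h]]] k; rewrite h; have /andP[h1 _] := ha k; have := hS k; lra.
Qed.

Lemma filler_backlog {R : realType} {n} {p : nat} {S S' : state R n} :
  filler_move p S S' -> backlog S' <= backlog S + 1.
Proof.
move=> [a [ha [_ h]]]; apply: backlog_le.
  by have := backlog_ge0 S; lra.
move=> k; rewrite h; have /andP[_ h2] := ha k; have := le_backlog S k; lra.
Qed.

Lemma empty_backlog {R : realType} {n} (eps : R) (S : state R n) E :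
  0 <= 1 + eps -> backlog (empty_cups eps S E) <= backlog S.
Proof.
move=> hd; apply: backlog_le; first exact: backlog_ge0.
move=> k; rewrite /empty_cups; have := le_backlog S k; have := backlog_ge0 S.
by case: (k \in E); mlra.
Qed.

Section Sets.
Local Open Scope classical_set_scope.
Definition optset {R : realType} {n} (g : game) (eps : R) (t : nat) (S : state R n) : set R :=
  [set v | exists p, allowed n g p /\ exists S' : state R n,
             filler_move p S S' /\
             v = inf [set w | exists E : {set 'I_n}, #|E| = p /\
                        w = OPT g eps t (empty_cups eps S' E)]].
Definition grset {R : realType} {n} (g : game) (eps : R) (t : nat) (S : state R n) : set R :=
  [set v | exists p, allowed n g p /\ exists S' : state R n,
             filler_move p S S' /\
             exists E : {set 'I_n}, #|E| = p /\ fullest S' E /\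
             v = GREEDY g eps t (empty_cups eps S' E)].
End Sets.

Lemma OPT_S {R : realType} {n} g (eps : R) t (S : state R n) :
  OPT g eps t.+1 S = sup (optset g eps t S).
Proof. by []. Qed.
Lemma GREEDY_S {R : realType} {n} g (eps : R) t (S : state R n) :
  GREEDY g eps t.+1 S = sup (grset g eps t S).
Proof. by []. Qed.
Local Open Scope classical_set_scope.

Lemma inf_attained {R : realType} (W : set R) (x : R) :
  W x -> (forall w, W w -> x <= w) -> inf W = x.
Proof.
move=> hx hlb; apply/eqP; rewrite eq_le; apply/andP; split.
  by apply: ge_inf => //; exists x.
by apply: lb_le_inf => //; exists x.
Qed.

Lemma optset_bounds {R : realType} {n} g (eps : R) t (S : state R n) :
  0 <= 1 + eps ->
  (forall S0 : state R n, 0 <= OPT g eps t S0 /\ OPT g eps t S0 <= backlog S0 + t%:R) ->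
  forall v, optset g eps t S v -> 0 <= v /\ v <= backlog S + t.+1%:R.
Proof.
move=> hd IH v [p [hp [S' [hmove ->]]]].
have [E0 [hE0 _]] := exists_fullest S' _ (filler_le hmove).
set W := [set w | exists E : {set 'I_n}, #|E| = p /\ w = OPT g eps t (empty_cups eps S' E)].
have hW0 : W (OPT g eps t (empty_cups eps S' E0)) by exists E0.
have hlb : forall w, W w -> 0 <= w by move=> w [E [_ ->]]; case: (IH (empty_cups eps S' E)).
split; first by apply: lb_le_inf => //; exists (OPT g eps t (empty_cups eps S' E0)).
apply: le_trans (ge_inf _ hW0) _; first by exists 0.
have := (IH (empty_cups eps S' E0)).2.
have := empty_backlog eps S' E0 hd.
have := filler_backlog hmove.
rewrite mulrS. lra.
Qed.

Lemma OPT_bounds {R : realType} {n} g (eps : R) t (S : state R n) :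
  0 <= 1 + eps -> 0 <= OPT g eps t S /\ OPT g eps t S <= backlog S + t%:R.
Proof.
move=> hd; elim: t S => [|t IH] S.
  by split; [exact: backlog_ge0 | rewrite /= addr0].
rewrite OPT_S.
have hb := @optset_bounds _ _ g eps t S hd IH.
case: (pselect (optset g eps t S !=set0)) => [[v0 hv0]|hne].
  have hub : has_ubound (optset g eps t S) by exists (backlog S + t.+1%:R) => v hv; case: (hb v hv).
  split.
    by apply: le_trans (ub_le_sup hub hv0); case: (hb v0 hv0).
  by apply: ge_sup; [exists v0 | move=> v hv; case: (hb v hv)].
have -> : optset g eps t S = set0.
  by apply/seteqP; split => // v hv; apply: hne; exists v.
rewrite sup0; split; first exact: lexx.
have := backlog_ge0 S; have : 0 <= (t.+1%:R : R) by apply: ler0n. lra.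
Qed.

Lemma OPT_mono {R : realType} {n} g (eps : R) t (A B : state R n) :
  0 <= 1 + eps -> (forall k, 0 <= A k) -> (forall k, 0 <= B k) -> Rel (1 + eps) A B ->
  OPT g eps t A <= OPT g eps t B.
Proof.
move=> hd; elim: t A B => [|t IH] A B hA hB hR.
  exact: Rel_backlog hd hB hR.
rewrite !OPT_S.
have hbB := @optset_bounds _ _ g eps t B hd (fun S0 => OPT_bounds g eps t S0 hd).
case: (pselect (optset g eps t A !=set0)) => [hneA|hne]; last first.
  have -> : optset g eps t A = set0.
    by apply/seteqP; split => // v hv; apply: hne; exists v.
  by rewrite sup0 -OPT_S; case: (OPT_bounds g eps t.+1 B hd).
have hubB : has_ubound (optset g eps t B)
  by exists (backlog B + t.+1%:R) => v hv; case: (hbB v hv).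
apply: ge_sup => // v [p [hp [S' [hmove ->]]]].
have hmove' := hmove.
case: hmove' => a [ha [hsum hS']].
have hS'e : S' = (fun k => A k + a k) by apply: funext => k; exact: hS'.
have [b [hb [hbs hRel]]] := @fill_step _ _ (1 + eps) A B a p hd hA hB hR ha hsum.
set B' := fun k => B k + b k.
have hmoveB : filler_move p B B' by exists b.
have hA' := filler_nonneg hA hmove.
have hB' := filler_nonneg hB hmoveB.
set WB := [set w | exists E : {set 'I_n}, #|E| = p /\ w = OPT g eps t (empty_cups eps B' E)].
have hv' : optset g eps t B (inf WB) by exists p; split => //; exists B'; split.
apply: le_trans (ub_le_sup hubB hv').
have [E0 [hE0 _]] := exists_fullest B' _ (filler_le hmove).
apply: lb_le_inf; first by exists (OPT g eps t (empty_cups eps B' E0)); exists E0.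
move=> w' [F [hF ->]].
rewrite -hS'e in hRel.
have [E [hE hRE]] := @empty_step _ _ eps S' B' F hd hA' hB' hRel.
apply: le_trans (IH _ _ (empty_nonneg hA') (empty_nonneg hB') hRE).
apply: ge_inf; last by exists E; split => //; rewrite hE hF.
exists 0 => w [E1 [_ ->]]; by case: (OPT_bounds g eps t (empty_cups eps S' E1) hd).
Qed.

Lemma swap_chain {R : realType} {n} g (eps : R) t (Z : state R n) (E : {set 'I_n}) :
  0 <= 1 + eps -> (forall k, 0 <= Z k) -> fullest Z E ->
  forall F : {set 'I_n}, #|F| = #|E| ->
  OPT g eps t (empty_cups eps Z E) <= OPT g eps t (empty_cups eps Z F).
Proof.
move=> hd hZ hfull.
suff H : forall m (F : {set 'I_n}), (#|F :\: E| <= m)%N -> #|F| = #|E| ->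
  OPT g eps t (empty_cups eps Z E) <= OPT g eps t (empty_cups eps Z F).
  by move=> F hF; exact: (H _ F (leqnn _) hF).
elim=> [|m IH] F hm hF.
  move: hm; rewrite leqn0 cards_eq0 finset.setD_eq0 => hsub.
  have /eqP -> : F == E by rewrite eqEcard hsub hF leqnn.
  exact: lexx.
case: (leqP #|F :\: E| m) => hm'; first exact: IH.
have hc : #|E :\: F| = #|F :\: E| by rewrite !cardsD finset.setIC hF.
have /card_gt0P [j hj] : (0 < #|F :\: E|)%N by lia.
have /card_gt0P [i hi] : (0 < #|E :\: F|)%N by lia.
move: (hj) (hi); rewrite !finset.in_setD => /andP [hjE hjF] /andP [hiF hiE].
have hij : i != j by apply/eqP => hij; move: hiE; rewrite hij (negbTE hjE).
pose F' := i |: (F :\ j).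
have hF' : #|F'| = #|E|.
  have h1 := cardsD1 j F; rewrite hjF in h1.
  by rewrite cardsU1 finset.in_setD1 (negbTE hiF) andbF /= -hF h1.
have hm2 : (#|F' :\: E| <= m)%N.
  have h1 := cardsD1 j (F :\: E); rewrite hj in h1.
  have : F' :\: E \subset (F :\: E) :\ j.
    apply/fintype.subsetP => x; rewrite /F' !inE.
    move=> /andP [hxE /orP [/eqP hx|/andP [hxj hxF]]].
      by move: hxE; rewrite hx hiE.
    by rewrite hxj hxE hxF.
  move=> /subset_leq_card h2; move: h1 hm h2 => /= h1 hm h2; lia.
apply: le_trans (IH F' hm2 hF') _.
apply: OPT_mono => //; try exact: empty_nonneg.
right; exists i, j; split => //; split.
  move=> k hki hkj; rewrite /empty_cups finset.in_setU1 finset.in_setD1 (negbTE hki) hkj /=.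
  exact: lexx.
right; rewrite /empty_cups finset.in_setU1 eqxx /= finset.in_setU1 finset.in_setD1 eqxx.
rewrite eq_sym (negbTE hij) (negbTE hiF) hjF /=.
have hzz := hfull i j hiE hjE.
split; last split.
- exact: lexx.
- exact: hzz.
- by move: (hZ j); mlra.
Qed.

Theorem corollary4p5 (R : realType) (n : nat) (g : game) (eps : R) :
  0 < eps -> game_ok n g ->
  forall (A : state R n), (forall i, 0 <= A i) ->
  forall t : nat, GREEDY g eps t A = OPT g eps t A.
Proof.
move=> heps _ A hA t.
have hd : 0 <= 1 + eps by lra.
elim: t A hA => [//|t IH] A hA.
rewrite GREEDY_S OPT_S; congr sup.
apply/seteqP; split => v.
  move=> [p [hp [S' [hmove [E [hE [hfull ->]]]]]]].
  exists p; split => //; exists S'; split => //.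
  have hS' := filler_nonneg hA hmove.
  rewrite IH; last exact: empty_nonneg.
  apply/esym/inf_attained; first by exists E.
  move=> w [F [hF ->]].
  by apply: swap_chain => //; rewrite hF hE.
move=> [p [hp [S' [hmove ->]]]].
have hS' := filler_nonneg hA hmove.
have [E [hE hfull]] := exists_fullest S' _ (filler_le hmove).
exists p; split => //; exists S'; split => //; exists E; split => //; split => //.
rewrite IH; last exact: empty_nonneg.
apply: inf_attained; first by exists E.
move=> w [F [hF ->]].
by apply: swap_chain => //; rewrite hF hE.
Qed.
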